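(* Let $q = p^{2a}$, let $\mathbb{Z}_q$ be the ring of integers of the unramified extension $\mathbb{Q}_q$ of $\mathbb{Q}_p$ of degree $2a$, let $\sigma$ be the lift of the $p$-power Frobenius to $\mathbb{Z}_q$, and let $\mathfrak{A} = \mathbb{Z}_q[F,V]$ be the Dieudonné ring ($FV = VF = p$, $F\lambda = \lambda^\sigma F$, $V\lambda^\sigma = \lambda V$ for $\lambda\in\mathbb{Z}_q$). Let $M$ be the $\mathfrak{A}$-module free over $\mathbb{Z}_q$ on $x,y$ with $Fx = Vx = y$, $Fy = Vy = px$ (the Dieudonné module of any elliptic curve over $\mathbb{F}_q$ with Weil polynomial $(x-\sqrt q)^2$, $\sqrt q = p^a$). For each $(p^2-1)$-st root of unity $\zeta\in\mathbb{Q}_{p^2}\subseteq\mathbb{Q}_q$, choose a $(q-1)$-st root of unity $\xi\in\mathbb{Q}_q$ with $N_{\mathbb{Q}_q/\mathbb{Q}_{p^2}}(\xi) = \zeta$, and let $M_\zeta$ be the $\mathfrak{A}$-module free over $\mathbb{Z}_q$ on $w,z$ with $Fw = z$, $Fz = \xi^{-1}pw$, $Vw = \xi^{\sigma^{-1}}z$, $Vz = pw$ (its isomorphism class is independent of the choice of $\xi$). Then: (a) the modules $M_\zeta$ are pairwise non-isomorphic as $\mathfrak{A}$-modules; (b) each $M_\zeta$ becomes isomorphic to $M$ after extension of scalars to the ring of integers of the maximal unramified extension of $\mathbb{Q}_q$ (with $F,V$ extended in the same way), i.e. each $M_\zeta$ is an $\overline{\mathbb{F}}_q/\mathbb{F}_q$-twist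 of $M$, and $M_\zeta$ is the twist of $M$ by the automorphism of $M$ given by $x\mapsto\zeta x$, $y\mapsto\zeta^\sigma y$; (c) if $p > 3$, every $\overline{\mathbb{F}}_q/\mathbb{F}_q$-twist of $M$ is isomorphic to some $M_\zeta$.
   Context: A twist of $M$ by an automorphism $u$ (of finite order) of $\overline{M}$ is a module $N$ over $\mathfrak{A}$ together with an isomorphism $\phi\colon\overline{M}\to\overline{N}$ of the base extensions such that $\phi^{-1}\phi^{(q)} = u$, where $\phi^{(q)}$ is the image of $\phi$ under the $q$-power Frobenius of $\overline{\mathbb{F}}_q/\mathbb{F}_q$. The endomorphism ring of $M$ (over both $\mathbb{F}_q$ and $\overline{\mathbb{F}}_q$) is the maximal order of the quaternion division algebra over $\mathbb{Q}_p$. *)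

(* Defs.v *)
From HB Require Import structures.
From mathcomp Require Import all_boot all_order all_algebra all_field.
Set Implicit Arguments. Unset Strict Implicit. Unset Printing Implicit Defensive.
Import Order.TTheory GRing.Theory.
Local Open Scope ring_scope.

Definition pdvd (R : idomainType) (p n : nat) (x : R) : Prop :=
  exists y : R, x = (p%:R ^+ n) * y.

(* R is a strict p-ring: p-torsion free, p-adically separated and complete.
   Together with a perfect residue field R/pR = K this characterises R as
   the Witt ring W(K) up to unique isomorphism. *)
Definition strict_p_ring (p : nat) (R : idomainType) : Prop :=
  [/\ forall x : R, p%:R * x = 0 -> x = 0,
      forall x : R, (forall n, pdvd p n x) -> x = 0 &
      forall s : nat -> R, (forall n, pdvd p n (s n.+1 - s n)) ->
        exists x : R, forall n, pdvd p n (x - s n)].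

Definition residue_map (p : nat) (R : idomainType) (K : fieldType)
  (pi : R -> K) : Prop :=
  (forall k : K, exists x : R, pi x = k) /\
  (forall x : R, pi x = 0 <-> pdvd p 1 x).

Definition frob_lift (p : nat) (R : idomainType) (K : fieldType)
  (pi : R -> K) (s : R -> R) : Prop :=
  forall x : R, pi (s x) = pi x ^+ p.

(* A Dieudonne module that is free of rank n over R, in a fixed basis:
   F v = A *m (sigma v), V v = B *m (sigma^-1 v)   (column vectors;
   column j of A is F(e_j), column j of B is V(e_j)).
   The relations FV = VF = p. *)
Definition dieud (p : nat) (R : idomainType) (s si : R -> R) (n : nat)
  (A B : 'M[R]_n) : Prop :=
  A *m map_mx s B = (p%:R)%:M /\ B *m map_mx si A = (p%:R)%:M.

Definition dmod_iso (R : idomainType) (s si : R -> R) (m n : nat)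
  (A B : 'M[R]_m) (A' B' : 'M[R]_n) : Prop :=
  exists (P : 'M[R]_(n, m)) (Q : 'M[R]_(m, n)),
    [/\ P *m Q = 1%:M, Q *m P = 1%:M,
        P *m A = A' *m map_mx s P & P *m B = B' *m map_mx si P].

Definition dmod_aut_fin (R : idomainType) (s si : R -> R) (m : nat)
  (A B : 'M[R]_m) (u : 'M[R]_m) : Prop :=
  [/\ u \in unitmx, u *m A = A *m map_mx s u, u *m B = B *m map_mx si u
    & exists k, (0 < k)%N /\ u ^+ k = 1%:M].

(* Over the big ring S (with Frobenius lift sS, and fr = the lift of the
   q-power Frobenius), the module N = (A',B') is a twist of M = (A,B) by u:
   there is an isomorphism phi : M -> N with phi^-1 phi^(q) = u, where
   phi^(q) is obtained by applying fr to the entries of phi (both M and N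
   come from modules defined over the small ring). *)
Definition twist (S : idomainType) (sS sSi fr : S -> S) (m n : nat)
  (A B : 'M[S]_m) (A' B' : 'M[S]_n) (u : 'M[S]_m) : Prop :=
  exists (phi : 'M[S]_(n, m)) (psi : 'M[S]_(m, n)),
    [/\ phi *m psi = 1%:M, psi *m phi = 1%:M,
        phi *m A = A' *m map_mx sS phi,
        phi *m B = B' *m map_mx sSi phi
      & psi *m map_mx fr phi = u].

Definition mx2 (R : idomainType) (a b c d : R) : 'M[R]_2 :=
  \matrix_(i < 2, j < 2)
     if val i == 0%N then (if val j == 0%N then a else b)
     else (if val j == 0%N then c else d).

(* M: F x = V x = y, F y = V y = p x   (basis x = e_0, y = e_1) *)
Definition MF (p : nat) (R : idomainType) : 'M[R]_2 := mx2 0 p%:R 1 0.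
Definition MV (p : nat) (R : idomainType) : 'M[R]_2 := mx2 0 p%:R 1 0.

(* M_zeta (built from xi): F w = z, F z = xi^-1 p w, V w = xi^(sigma^-1) z,
   V z = p w   (basis w = e_0, z = e_1) *)
Definition MzF (p : nat) (R : idomainType) (xi : R) : 'M[R]_2 :=
  mx2 0 (xi^-1 * p%:R) 1 0.
Definition MzV (p : nat) (R : idomainType) (si : R -> R) (xi : R) : 'M[R]_2 :=
  mx2 0 p%:R (si xi) 0.

(* Main.v *)
Require Import Defs.
From HB Require Import structures.
From mathcomp Require Import all_boot all_order all_algebra all_field all_fingroup all_solvable.
From mathcomp Require Import ring zify.
From Stdlib Require Import ClassicalEpsilon.
Set Implicit Arguments. Unset Strict Implicit. Unset Printing Implicit Defensive.
Import GRing.Theory.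
Local Open Scope ring_scope.

Section PAdic.
Variables (p : nat) (R : idomainType) (F : fieldType) (pi : {rmorphism R -> F}).
Hypotheses (pp : prime p) (hR : strict_p_ring p R) (hpi : residue_map p pi).

Lemma pR_neq0 : (p%:R : R) != 0.
Proof.
apply/eqP=> h; case: hR => tf _ _.
have := tf 1; rewrite mulr1 h => /(_ erefl) /eqP; by rewrite oner_eq0.
Qed.

Lemma pRX_neq0 n : (p%:R : R) ^+ n != 0.
Proof. by rewrite expf_neq0 // pR_neq0. Qed.

Lemma pdvd0 (x : R) : pdvd p 0 x.
Proof. by exists x; rewrite expr0 mul1r. Qed.

Lemma pdvdD n (x y : R) : pdvd p n x -> pdvd p n y -> pdvd p n (x + y).
Proof. by move=> [a ->] [b ->]; exists (a + b); rewrite mulrDr. Qed.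

Lemma pdvdN n (x : R) : pdvd p n x -> pdvd p n (- x).
Proof. by move=> [a ->]; exists (- a); rewrite mulrN. Qed.

Lemma pdvdB n (x y : R) : pdvd p n x -> pdvd p n y -> pdvd p n (x - y).
Proof. by move=> hx hy; apply: pdvdD => //; apply: pdvdN. Qed.

Lemma pdvdMl n (x y : R) : pdvd p n x -> pdvd p n (y * x).
Proof. by move=> [a ->]; exists (y * a); rewrite mulrCA. Qed.

Lemma pdvdMr n (x y : R) : pdvd p n x -> pdvd p n (x * y).
Proof. by move=> hx; rewrite mulrC; apply: pdvdMl. Qed.

Lemma pdvdM2 m n (x y : R) : pdvd p m x -> pdvd p n y -> pdvd p (m + n) (x * y).
Proof. by move=> [a ->] [b ->]; exists (a * b); rewrite exprD mulrACA. Qed.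

Lemma pdvd_le m n (x : R) : (m <= n)%N -> pdvd p n x -> pdvd p m x.
Proof.
move=> le [a ->]; exists (p%:R ^+ (n - m) * a).
by rewrite mulrA -exprD subnKC.
Qed.

Lemma pdvd_pX n m (x : R) : pdvd p m x -> pdvd p (n + m) (p%:R ^+ n * x).
Proof. by move=> h; apply: pdvdM2 => //; exists 1; rewrite mulr1. Qed.

Lemma pdvd_pXx n (x : R) : pdvd p n (p%:R ^+ n * x).
Proof. by exists x. Qed.

Lemma pdvd_cancel n m (x : R) : pdvd p (n + m) (p%:R ^+ n * x) -> pdvd p m x.
Proof.
move=> [a]; rewrite exprD -mulrA => /mulfI h; exists a; apply: h; exact: pRX_neq0.
Qed.

Lemma eq_sep (x y : R) : (forall n, pdvd p n (x - y)) -> x = y.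
Proof. by case: hR => _ sep _ h; apply/eqP; rewrite -subr_eq0; apply/eqP/sep. Qed.

Lemma pi_eq (x y : R) : pi x = pi y <-> pdvd p 1 (x - y).
Proof.
case: hpi => _ ker; split=> [h|/ker]; first by apply/ker; rewrite rmorphB /= h subrr.
by rewrite rmorphB /= => /eqP; rewrite subr_eq0 => /eqP.
Qed.

Lemma pi0 (x : R) : pi x = 0 <-> pdvd p 1 x.
Proof. by case: hpi. Qed.

Lemma pi_p : pi (p%:R) = 0.
Proof. by apply/pi0; exists 1; rewrite expr1 mulr1. Qed.

Lemma pF0 : (p%:R : F) = 0.
Proof. by rewrite -pi_p rmorph_nat. Qed.

Lemma pcharF : p \in [pchar F].
Proof. by rewrite inE pp /= pF0 eqxx. Qed.

Lemma pi_pdvd n (x : R) : (0 < n)%N -> pdvd p n x -> pi x = 0.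
Proof. by move=> n0 h; apply/pi0; apply: pdvd_le h. Qed.

Lemma pdvd_powp n (x y : R) : pdvd p n.+1 (x - y) -> pdvd p n.+2 (x ^+ p - y ^+ p).
Proof.
move=> h; rewrite subrXX.
have exy : pi x = pi y by apply/pi_eq; apply: pdvd_le h.
have h1 : pdvd p 1 (\sum_(i < p) x ^+ (p.-1 - i) * y ^+ i).
  apply/pi0; rewrite rmorph_sum /=.
  rewrite (eq_bigr (fun _ => pi y ^+ p.-1)); last first.
    move=> i _; rewrite rmorphM /= !rmorphXn /= exy -exprD subnK //.
    by rewrite -ltnS prednK ?prime_gt0.
  by rewrite sumr_const card_ord -mulr_natl pF0 mul0r.
by have := pdvdM2 h h1; rewrite addn1.
Qed.

Lemma pdvd_powpX k n (x y : R) :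
  pdvd p n.+1 (x - y) -> pdvd p (n.+1 + k) (x ^+ (p ^ k) - y ^+ (p ^ k)).
Proof.
elim: k => [|k IH] h; first by rewrite addn0 expn0 !expr1.
rewrite expnSr !exprM addnS; exact: pdvd_powp (IH h).
Qed.

Lemma plim (s : nat -> R) : (forall n, pdvd p n (s n.+1 - s n)) ->
  exists x, forall n, pdvd p n (x - s n).
Proof. by case: hR => _ _ c; apply: c. Qed.

Lemma pdvd1_unit (x : R) : pi x != 0 -> x \is a GRing.unit.
Proof.
move=> nz; case: hpi => surj _.
have [t ht] := surj (pi x)^-1.
pose r := 1 - x * t.
have hr : pdvd p 1 r.
  apply/pi0; rewrite /r rmorphB rmorphM /= rmorph1 ht mulfV // subrr //.
pose s n := \sum_(i < n) r ^+ i.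
have hs : forall n, pdvd p n (s n.+1 - s n).
  move=> n; rewrite /s big_ord_recr /= addrAC subrr add0r.
  have [a ->] := hr; rewrite exprMn -exprM mul1n; exact: pdvd_pXx.
have [w hw] := plim hs.
have key : (1 - r) * w = 1.
  apply: eq_sep => n.
  have -> : (1 - r) * w - 1 = (1 - r) * (w - s n) - r ^+ n.
    have e : (1 - r) * \sum_(i < n) r ^+ i = 1 - r ^+ n.
      by rewrite -opprB mulNr -subrX1 opprB.
    rewrite mulrBr /s e; ring.
  apply: pdvdB; first exact: pdvdMl.
  have [a ->] := hr; rewrite exprMn -exprM mul1n; exact: pdvd_pXx.
by apply/unitrP; exists (t * w); rewrite /r opprB addrC subrK in key;
  rewrite mulrA key mulrC mulrA key.
Qed.

End PAdic.

Section Roots.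
Variables (p : nat) (R : idomainType) (F : fieldType) (pi : {rmorphism R -> F}).
Hypotheses (pp : prime p) (hR : strict_p_ring p R) (hpi : residue_map p pi).

Lemma root_unity_eq m (x y : R) : ~~ (p %| m)%N -> x ^+ m = 1 -> y ^+ m = 1 ->
  pi x = pi y -> x = y.
Proof.
move=> pm xm ym exy; apply/eqP; rewrite -subr_eq0.
have : x ^+ m - y ^+ m = 0 by rewrite xm ym subrr.
rewrite subrXX => /eqP; rewrite mulf_eq0 => /orP[//|/eqP hs].
have : pi (\sum_(i < m) x ^+ (m.-1 - i) * y ^+ i) = 0 by rewrite hs rmorph0.
rewrite rmorph_sum /= (eq_bigr (fun _ => pi y ^+ m.-1)); last first.
  move=> i _; rewrite rmorphM /= !rmorphXn /= exy -exprD subnK //.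
  have m0 : (0 < m)%N by case: m pm {xm ym hs} i => //; rewrite dvdn0.
  by rewrite -ltnS prednK.
rewrite sumr_const card_ord -mulr_natl => /eqP; rewrite mulf_eq0 => /orP[].
  by rewrite -(dvdn_pcharf (pcharF pp hpi)) (negbTE pm).
move=> /eqP h0; have : pi y ^+ m = 1 by rewrite -rmorphXn ym rmorph1.
have m0 : (0 < m)%N by case: m pm {xm ym hs h0} => //; rewrite dvdn0.
by rewrite -(prednK m0) exprS h0 mulr0 => /eqP; rewrite eq_sym oner_eq0.
Qed.

Lemma frob_root (s : {rmorphism R -> R}) m (x : R) : frob_lift p pi s ->
  ~~ (p %| m)%N -> x ^+ m = 1 -> s x = x ^+ p.
Proof.
move=> fl pm xm; apply: (root_unity_eq pm).
- by rewrite -rmorphXn xm rmorph1.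
- by rewrite -exprM mulnC exprM xm expr1n.
- by rewrite fl rmorphXn.
Qed.

Lemma frob_iter (s : {rmorphism R -> R}) n (x : R) : frob_lift p pi s ->
  pi (iter n s x) = pi x ^+ (p ^ n).
Proof.
move=> fl; elim: n => [|n IH]; first by rewrite expn0 expr1.
by rewrite iterS fl IH -exprM expnSr.
Qed.

Lemma teich N (k : F) : (0 < N)%N -> k ^+ (p ^ N) = k ->
  exists T : R, T ^+ (p ^ N) = T /\ pi T = k.
Proof.
move=> N0 kN; case: hpi => surj _; have [y hy] := surj k.
pose s n := y ^+ (p ^ (N * n)).
have sS n : s n ^+ (p ^ N) = s n.+1 by rewrite /s -exprM -expnD mulnS addnC.
have y1 : pdvd p 1 (y ^+ (p ^ N) - y).
  by apply/(pi_eq hpi); rewrite rmorphXn /= hy kN.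
have hs : forall n, pdvd p n (s n.+1 - s n).
  move=> n; have := pdvd_powpX pp hpi (N * n) y1.
  rewrite /s -!exprM -expnD addnC -mulnS => h; apply: pdvd_le h.
  by rewrite addn1 ltnW // ltnS leq_pmull.
have [T hT] := plim hR hs.
exists T; split.
  apply: (eq_sep hR) => n.
  have h1 := pdvd_powpX pp hpi N (hT n.+1).
  rewrite sS in h1.
  have -> : T ^+ (p ^ N) - T = (T ^+ (p ^ N) - s n.+2) - (T - s n.+2) by ring.
  apply: pdvdB; first by apply: pdvd_le h1; lia.
  by apply: pdvd_le (hT n.+2); rewrite ltnW.
have : pi T = pi (s 1) by apply/(pi_eq hpi); exact: hT 1%N.
by rewrite /s muln1 rmorphXn /= hy kN.
Qed.

End Roots.

Lemma powsurj (K : finFieldType) n m (c : K) :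
  (n * m)%N = #|K|.-1 -> c ^+ m = 1 -> exists y : K, y ^+ n = c.
Proof.
move=> nm cm.
have m0 : (0 < m)%N.
  case: m nm cm => // ; rewrite muln0 => h _; have := finNzRing_gt1 K; by case: #|K| h => [|[|k]].
have c0 : c != 0.
  apply/eqP=> c0; move: cm; rewrite c0 expr0n; case: m m0 {nm} => // m _ /eqP; by rewrite eq_sym oner_eq0.
pose cu := finField_unit c0.
have /cyclicP [g hg] := field_unit_group_cyclic [set: {unit K}]%G.
have : cu \in <[g]>%g by rewrite -hg inE.
move=> /cycleP [k hk].
have og : #[g]%g = #|K|.-1 by rewrite /order -hg card_finField_unit.
have cum : (cu ^+ m)%g = 1%g.
  by apply: val_inj; rewrite FinRing.val_unitX /= cm.
have : (#[g]%g %| k * m)%N by rewrite order_dvdn expgM -hk cum.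
rewrite og -nm dvdn_pmul2r // => /dvdnP [j hj].
exists (FinRing.uval g ^+ j).
by rewrite -exprM -hj -FinRing.val_unitX -hk.
Qed.

Lemma closed_root (L : closedFieldType) n (c : L) : (0 < n)%N ->
  exists y : L, y ^+ n = c.
Proof.
move=> n0; have [y hy] := @solve_monicpoly L n (fun i => if i == 0%N then c else 0) n0.
exists y; rewrite hy (bigD1 (Ordinal n0)) //= big1 ?addr0 ?expr0 ?mulr1 //.
move=> i /negbTE; rewrite -val_eqE /= => ->; exact: mul0r.
Qed.

Section Mx2.
Variable R : idomainType.

Definition i0 : 'I_2 := ord0.
Definition i1 : 'I_2 := ord_max.

Lemma mx2E00 (a b c d : R) : mx2 a b c d i0 i0 = a. Proof. by rewrite /mx2 mxE. Qed.
Lemma mx2E01 (a b c d : R) : mx2 a b c d i0 i1 = b. Proof. by rewrite /mx2 mxE. Qed.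
Lemma mx2E10 (a b c d : R) : mx2 a b c d i1 i0 = c. Proof. by rewrite /mx2 mxE. Qed.
Lemma mx2E11 (a b c d : R) : mx2 a b c d i1 i1 = d. Proof. by rewrite /mx2 mxE. Qed.

Lemma ord2P (i : 'I_2) : i = i0 \/ i = i1.
Proof. by case: i => [[|[|k]] h] //; [left|right]; apply: val_inj. Qed.

Lemma mx2_eta (X : 'M[R]_2) : X = mx2 (X i0 i0) (X i0 i1) (X i1 i0) (X i1 i1).
Proof.
apply/matrixP => i j; rewrite /mx2 mxE.
by case: (ord2P i) => ->; case: (ord2P j) => ->.
Qed.

Lemma mx2_eq (a b c d a' b' c' d' : R) :
  mx2 a b c d = mx2 a' b' c' d' -> [/\ a = a', b = b', c = c' & d = d'].
Proof.
move=> h; split.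
- by have := f_equal (fun X : 'M[R]_2 => X i0 i0) h; rewrite !mx2E00.
- by have := f_equal (fun X : 'M[R]_2 => X i0 i1) h; rewrite !mx2E01.
- by have := f_equal (fun X : 'M[R]_2 => X i1 i0) h; rewrite !mx2E10.
- by have := f_equal (fun X : 'M[R]_2 => X i1 i1) h; rewrite !mx2E11.
Qed.

Lemma mulmx2 (a b c d a' b' c' d' : R) :
  mx2 a b c d *m mx2 a' b' c' d' =
  mx2 (a * a' + b * c') (a * b' + b * d') (c * a' + d * c') (c * b' + d * d').
Proof.
apply/matrixP => i j; rewrite mxE big_ord_recr big_ord_recr big_ord0 /= add0r.
rewrite /mx2 !mxE.
by case: (ord2P i) => ->; case: (ord2P j) => ->.
Qed.

Lemma addmx2 (a b c d a' b' c' d' : R) :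
  mx2 a b c d + mx2 a' b' c' d' = mx2 (a + a') (b + b') (c + c') (d + d').
Proof.
apply/matrixP => i j; rewrite /mx2 !mxE.
by case: (ord2P i) => ->; case: (ord2P j) => ->.
Qed.

Lemma scalemx2 (k a b c d : R) : k *: mx2 a b c d = mx2 (k * a) (k * b) (k * c) (k * d).
Proof.
apply/matrixP => i j; rewrite /mx2 !mxE.
by case: (ord2P i) => ->; case: (ord2P j) => ->.
Qed.

Lemma mx2_1 : (1%:M : 'M[R]_2) = mx2 1 0 0 1.
Proof.
apply/matrixP => i j; rewrite /mx2 !mxE.
by case: (ord2P i) => ->; case: (ord2P j) => ->.
Qed.

Lemma mx2_1r : (1 : 'M[R]_2) = mx2 1 0 0 1.
Proof. exact: mx2_1. Qed.

Lemma mx2_scalar (k : R) : (k%:M : 'M[R]_2) = mx2 k 0 0 k.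
Proof.
apply/matrixP => i j; rewrite /mx2 !mxE.
by case: (ord2P i) => ->; case: (ord2P j) => ->.
Qed.

Lemma mx2_0 : (0 : 'M[R]_2) = mx2 0 0 0 0.
Proof.
apply/matrixP => i j; rewrite /mx2 !mxE.
by case: (ord2P i) => ->; case: (ord2P j) => ->.
Qed.

Lemma det_mx2 (a b c d : R) : \det (mx2 a b c d) = a * d - b * c.
Proof.
rewrite (expand_det_row _ i0) big_ord_recr big_ord_recr big_ord0 /= add0r.
rewrite /cofactor !det_mx11 /= !mxE /= add0n expr0 expr1; ring.
Qed.

End Mx2.

Lemma map_mx2 (R S : idomainType) (f : R -> S) (a b c d : R) :
  map_mx f (mx2 a b c d) = mx2 (f a) (f b) (f c) (f d).
Proof.
apply/matrixP => i j; rewrite /mx2 !mxE.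
by case: (ord2P i) => ->; case: (ord2P j) => ->.
Qed.

Lemma map_mx_cancel (R S : Type) (f : R -> S) (g : S -> R) m n :
  cancel f g -> cancel (@map_mx _ _ f m n) (map_mx g).
Proof. by move=> fg X; apply/matrixP => i j; rewrite !mxE fg. Qed.

Lemma map_mx_inj (R S : Type) (f : R -> S) (g : S -> R) m n :
  cancel f g -> injective (@map_mx _ _ f m n).
Proof. move=> fg X Y h; by rewrite -(map_mx_cancel fg X) h map_mx_cancel. Qed.

Lemma mx_lcancel (S : idomainType) m n (A : 'M[S]_n) (X Y : 'M[S]_(n, m)) :
  \det A != 0 -> A *m X = A *m Y -> X = Y.
Proof.
move=> dA h; have := f_equal (mulmx (\adj A)) h; rewrite !mulmxA mul_adj_mx.
rewrite !mul_scalar_mx => /matrixP e; apply/matrixP => i j.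
by have := e i j; rewrite !mxE => /mulfI; apply.
Qed.

Lemma mx_rcancel (S : idomainType) m n (A : 'M[S]_n) (X Y : 'M[S]_(m, n)) :
  \det A != 0 -> X *m A = Y *m A -> X = Y.
Proof.
move=> dA h; have := f_equal (mulmx^~ (\adj A)) h; rewrite -!mulmxA mul_mx_adj.
rewrite !mul_mx_scalar => /matrixP e; apply/matrixP => i j.
by have := e i j; rewrite !mxE => /mulfI; apply.
Qed.

Lemma FtoV (S : idomainType) (s : {rmorphism S -> S}) (si : S -> S)
  m n (P : 'M[S]_(n, m)) (A1 B1 : 'M[S]_m) (A2 B2 : 'M[S]_n) (c : S) :
  cancel s si -> cancel si s ->
  A1 *m map_mx s B1 = c%:M -> A2 *m map_mx s B2 = c%:M -> \det A2 != 0 ->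
  P *m A1 = A2 *m map_mx s P -> P *m B1 = B2 *m map_mx si P.
Proof.
move=> ssi sis h1 h2 dA hP; apply: (map_mx_inj ssi).
rewrite !map_mxM (map_mx_cancel sis).
apply: (mx_lcancel dA); rewrite !mulmxA -hP -mulmxA h1 h2.
by rewrite mul_mx_scalar mul_scalar_mx.
Qed.

Section Lev.
Variables (p : nat) (S : idomainType) (L : fieldType) (piS : {rmorphism S -> L}).
Hypotheses (pp : prime p) (hS : strict_p_ring p S) (hpiS : residue_map p piS).

Definition lev (k00 k01 k10 k11 : nat) (X : 'M[S]_2) :=
  [/\ pdvd p k00 (X i0 i0), pdvd p k01 (X i0 i1), pdvd p k10 (X i1 i0) & pdvd p k11 (X i1 i1)].

Lemma lev_mul a00 a01 a10 a11 b00 b01 b10 b11 c00 c01 c10 c11 (X Y : 'M[S]_2) :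
  lev a00 a01 a10 a11 X -> lev b00 b01 b10 b11 Y ->
  (c00 <= a00 + b00)%N -> (c00 <= a01 + b10)%N ->
  (c01 <= a00 + b01)%N -> (c01 <= a01 + b11)%N ->
  (c10 <= a10 + b00)%N -> (c10 <= a11 + b10)%N ->
  (c11 <= a10 + b01)%N -> (c11 <= a11 + b11)%N ->
  lev c00 c01 c10 c11 (X *m Y).
Proof.
rewrite (mx2_eta X) (mx2_eta Y) /lev !mx2E00 !mx2E01 !mx2E10 !mx2E11 mulmx2.
rewrite !mx2E00 !mx2E01 !mx2E10 !mx2E11.
move=> [x1 x2 x3 x4] [y1 y2 y3 y4] l1 l2 l3 l4 l5 l6 l7 l8; split; apply: pdvdD.
- exact: pdvd_le l1 (pdvdM2 x1 y1).
- exact: pdvd_le l2 (pdvdM2 x2 y3).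
- exact: pdvd_le l3 (pdvdM2 x1 y2).
- exact: pdvd_le l4 (pdvdM2 x2 y4).
- exact: pdvd_le l5 (pdvdM2 x3 y1).
- exact: pdvd_le l6 (pdvdM2 x4 y3).
- exact: pdvd_le l7 (pdvdM2 x3 y2).
- exact: pdvd_le l8 (pdvdM2 x4 y4).
Qed.

Lemma lev_le a00 a01 a10 a11 c00 c01 c10 c11 (X : 'M[S]_2) :
  lev a00 a01 a10 a11 X ->
  (c00 <= a00)%N -> (c01 <= a01)%N -> (c10 <= a10)%N -> (c11 <= a11)%N ->
  lev c00 c01 c10 c11 X.
Proof. by move=> [h1 h2 h3 h4] *; split; apply: pdvd_le; eassumption. Qed.

Lemma lev_add k00 k01 k10 k11 (X Y : 'M[S]_2) :
  lev k00 k01 k10 k11 X -> lev k00 k01 k10 k11 Y -> lev k00 k01 k10 k11 (X + Y).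
Proof.
rewrite (mx2_eta X) (mx2_eta Y) addmx2 /lev !mx2E00 !mx2E01 !mx2E10 !mx2E11.
by move=> [? ? ? ?] [? ? ? ?]; split; apply: pdvdD.
Qed.

Lemma lev0 k00 k01 k10 k11 : lev k00 k01 k10 k11 0.
Proof. by rewrite mx2_0; split; rewrite ?mx2E00 ?mx2E01 ?mx2E10 ?mx2E11; exists 0; rewrite mulr0. Qed.

Lemma lev_sum k00 k01 k10 k11 n (F : 'I_n -> 'M[S]_2) :
  (forall i, lev k00 k01 k10 k11 (F i)) -> lev k00 k01 k10 k11 (\sum_(i < n) F i).
Proof.
move=> h; elim/big_ind: _ => //; [exact: lev0 | exact: lev_add].
Qed.

Lemma lev_muln k00 k01 k10 k11 (X : 'M[S]_2) c :
  lev k00 k01 k10 k11 X -> (p %| c)%N -> lev k00.+1 k01.+1 k10.+1 k11.+1 (X *+ c).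
Proof.
have aux k (y : S) d : pdvd p k y -> pdvd p k.+1 (y *+ (d * p)).
  by move=> [w ->]; exists (d%:R * w); rewrite -[LHS]mulr_natl natrM exprS; ring.
by move=> [h1 h2 h3 h4] /dvdnP [d ->]; split; rewrite mulmxnE; apply: aux.
Qed.

Lemma pi00M (X Y : 'M[S]_2) : lev 0 1 0 0 X -> lev 0 1 0 0 Y ->
  piS ((X *m Y) i0 i0) = piS (X i0 i0) * piS (Y i0 i0) /\
  piS ((X *m Y) i1 i1) = piS (X i1 i1) * piS (Y i1 i1).
Proof.
rewrite (mx2_eta X) (mx2_eta Y) /lev !mx2E00 !mx2E01 !mx2E10 !mx2E11 mulmx2.
rewrite !mx2E00 !mx2E11 => [[_ x2 _ _] [_ y2 _ _]].
rewrite !rmorphD !rmorphM /= (pi_pdvd hpiS _ x2) // (pi_pdvd hpiS _ y2) //.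
by rewrite mul0r mulr0 !addr0 add0r.
Qed.

Lemma lev0_mul (X Y : 'M[S]_2) : lev 0 1 0 0 X -> lev 0 1 0 0 Y -> lev 0 1 0 0 (X *m Y).
Proof. by move=> hx hy; apply: (lev_mul hx hy). Qed.

Lemma lev0_1 : lev 0 1 0 0 (1%:M).
Proof. by rewrite mx2_1 /lev mx2E00 mx2E01 mx2E10 mx2E11; split; try apply: pdvd0; exists 0; rewrite mulr0. Qed.

Lemma lev0_exp (X : 'M[S]_2) n : lev 0 1 0 0 X -> lev 0 1 0 0 (X ^+ n).
Proof.
move=> hx; elim: n => [|n IH]; first exact: lev0_1.
by rewrite exprSr; apply: lev0_mul.
Qed.

Lemma pi00X (X : 'M[S]_2) n : lev 0 1 0 0 X ->
  piS ((X ^+ n) i0 i0) = piS (X i0 i0) ^+ n /\ piS ((X ^+ n) i1 i1) = piS (X i1 i1) ^+ n.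
Proof.
move=> hx; elim: n => [|n [IH1 IH2]].
  by rewrite expr0 mx2_1r mx2E00 mx2E11 rmorph1.
by rewrite exprSr; have [-> ->] := pi00M (lev0_exp n hx) hx; rewrite IH1 IH2 -!exprSr.
Qed.

Lemma torsion (w : 'M[S]_2) : (4 < p)%N -> lev 0 1 0 0 w -> w ^+ p = 1 -> w = 1.
Proof.
move=> p4 hw wp.
have cF := pcharF pp hpiS.
have frob (y : L) : y ^+ p = 1 -> y = 1.
  move=> yp; apply/eqP; rewrite -subr_eq0; apply/eqP.
  have : (y - 1) ^+ p = 0.
    by rewrite -(pFrobenius_autE cF) pFrobenius_autB_comm ?pFrobenius_autE ?yp ?expr1n ?subrr //; exact: commr1.
  by move/eqP; rewrite expf_eq0 => /andP [_ /eqP].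
have [e0 e1] := pi00X p hw; rewrite wp mx2_1r mx2E00 mx2E11 rmorph1 in e0 e1.
have w00 := frob _ (esym e0); have w11 := frob _ (esym e1).
set x := w - 1.
have hx : lev 1 1 0 1 x.
  case: hw => h1 h2 h3 h4; rewrite /x; split; rewrite !mxE /=.
  - by apply/(pi_eq hpiS); rewrite w00 rmorph1.
  - by rewrite subr0.
  - by rewrite subr0; apply: pdvd0.
  - by apply/(pi_eq hpiS); rewrite w11 rmorph1.
have x1 : forall k, lev 1 1 0 1 (x ^+ k.+1).
  elim=> [|k IH]; first by rewrite expr1.
  rewrite exprSr; apply: (lev_mul IH hx) => //.
have x2 : lev 1 2 1 1 (x ^+ 2) by rewrite expr2; apply: (lev_mul hx hx).
have x4 : lev 2 2 1 2 (x ^+ 4).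
  have -> : x ^+ 4 = x ^+ 2 *m x ^+ 2 by rewrite mulmxE -exprD.
  by apply: (lev_mul x2 x2).
have xk : forall k, lev 2 2 1 2 (x ^+ (4 + k)).
  elim=> [|k IH]; first by rewrite addn0.
  by rewrite addnS exprSr; apply: (lev_mul IH hx).
have wx : w = x + 1 by rewrite /x subrK.
have : (x + 1) ^+ p = 1 by rewrite -wx.
rewrite exprD1n big_ord_recl /= expr0 bin0 mulr1n => /eqP; rewrite addrC -subr_eq0 addrK => /eqP hsum.
pose T := \sum_(i < p) x ^+ i *+ 'C(p, i.+1).
have xT : x *m T = 0.
  rewrite -hsum /T mulmx_sumr; apply: eq_bigr => i _.
  by rewrite /bump leq0n add1n mulmxE mulrnAr -exprS.
have p0 : (0 < p)%N by exact: prime_gt0.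
have hT : T = (p%:R)%:M + \sum_(i < p.-1) x ^+ i.+1 *+ 'C(p, i.+2).
  rewrite /T -(prednK p0) big_ord_recl /= expr0 bin1 prednK //.
  by rewrite -scalemx1 scaler_nat.
have hE : lev 2 2 1 2 (\sum_(i < p.-1) x ^+ i.+1 *+ 'C(p, i.+2)).
  apply: lev_sum => i.
  have ip : (i < p.-1)%N := ltn_ord i.
  have [lt | eq] : (i.+2 < p)%N \/ (i.+2 = p)%N by lia.
    apply: (lev_muln (x1 i)); apply: prime_dvd_bin => //; lia.
  rewrite eq binn mulr1n.
  have -> : i.+1 = (4 + (i.+1 - 4))%N by lia.
  exact: xk.
set E := \sum_(i < p.-1) _ in hT hE.
have dT : \det T != 0.
  rewrite hT (mx2_eta E) mx2_scalar addmx2 det_mx2 !add0r.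
  case: hE => [[e00 ->] [e01 ->] [e10 ->] [e11 ->]].
  have -> : (p%:R + p%:R ^+ 2 * e00) * (p%:R + p%:R ^+ 2 * e11) -
      p%:R ^+ 2 * e01 * (p%:R ^+ 1 * e10) =
      p%:R ^+ 2 * ((1 + p%:R * e00) * (1 + p%:R * e11) - p%:R * (e01 * e10)) :> S by ring.
  rewrite mulf_neq0 ?expf_neq0 ?(pR_neq0 hS) //.
  apply/eqP => h0; have := f_equal piS h0.
  rewrite rmorph0 rmorphB rmorphM /= !rmorphD !rmorphM /= rmorph1 (pi_p hpiS) !mul0r !addr0 subr0 mulr1.
  by move/eqP; rewrite oner_eq0.
rewrite wx (_ : x = 0) ?add0r //.
by apply: (mx_rcancel dT); rewrite xT mul0mx.
Qed.

End Lev.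

Section Iter.
Variable (R : idomainType) (f : {rmorphism R -> R}).
Lemma iterM n (x y : R) : iter n f (x * y) = iter n f x * iter n f y.
Proof. by elim: n => //= n ->; rewrite rmorphM. Qed.
Lemma iterD n (x y : R) : iter n f (x + y) = iter n f x + iter n f y.
Proof. by elim: n => //= n ->; rewrite rmorphD. Qed.
Lemma iterN n (x : R) : iter n f (- x) = - iter n f x.
Proof. by elim: n => //= n ->; rewrite rmorphN. Qed.
Lemma iter1 n : iter n f 1 = 1.
Proof. by elim: n => //= n ->; rewrite rmorph1. Qed.
Lemma iter0 n : iter n f 0 = 0.
Proof. by elim: n => //= n ->; rewrite rmorph0. Qed.
Lemma iterX n k (x : R) : iter n f (x ^+ k) = iter n f x ^+ k.
Proof. by elim: n => //= n ->; rewrite rmorphXn. Qed.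
Lemma iter_nat n k : iter n f k%:R = k%:R.
Proof. by elim: n => //= n ->; rewrite rmorph_nat. Qed.
Lemma iter_prod n k (F : nat -> R) :
  iter n f (\prod_(i < k) F i) = \prod_(i < k) iter n f (F i).
Proof.
elim: k => [|k IH]; first by rewrite !big_ord0 iter1.
by rewrite !big_ord_recr /= iterM IH.
Qed.
End Iter.

Lemma unit_neq0 (T : idomainType) (x : T) : x \is a GRing.unit -> x != 0.
Proof. by apply: contraTneq => ->; rewrite unitr0. Qed.

Section Main.
Variables (p a : nat)
  (R S : idomainType) (K : finFieldType) (L : closedFieldType)
  (piR : {rmorphism R -> K}) (piS : {rmorphism S -> L})
  (sg : {rmorphism R -> R}) (sgi : R -> R)
  (sgS : {rmorphism S -> S}) (sgSi : S -> S)
  (iota : {rmorphism R -> S}).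
Hypotheses (pp : prime p) (a0 : (0 < a)%N) (cardK : #|K| = (p ^ (2 * a))%N)
  (hR : strict_p_ring p R) (hpiR : residue_map p piR)
  (hS : strict_p_ring p S) (hpiS : residue_map p piS)
  (sg1 : cancel sg sgi) (sg2 : cancel sgi sg) (flR : frob_lift p piR sg)
  (sgS1 : cancel sgS sgSi) (sgS2 : cancel sgSi sgS) (flS : frob_lift p piS sgS)
  (comm : forall x : R, sgS (iota x) = iota (sg x)).

Local Notation q := (p ^ (2 * a))%N.
Definition adm (zeta xi : R) :=
    [/\ zeta ^+ (p ^ 2).-1 = 1, xi ^+ q.-1 = 1
      & \prod_(i < a) iter (2 * i) sg xi = zeta].

Lemma p_gt1 : (1 < p)%N. Proof. exact: prime_gt1. Qed.

Lemma ndvd_predX k : (0 < k)%N -> ~~ (p %| (p ^ k).-1)%N.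
Proof.
move=> k0; apply/negP => h.
have hk : (p %| p ^ k)%N by rewrite dvdn_exp.
have : (p %| (p ^ k).-1 + 1)%N by rewrite addn1 prednK ?expn_gt0 ?prime_gt0.
rewrite dvdn_addr // dvdn1 => /eqP p1; have := p_gt1; by rewrite p1.
Qed.

Lemma q_ndvd : ~~ (p %| q.-1)%N.
Proof. by apply: ndvd_predX; rewrite muln_gt0 a0. Qed.
Lemma p2_ndvd : ~~ (p %| (p ^ 2).-1)%N.
Proof. exact: ndvd_predX. Qed.

Lemma iter_comm n (x : R) : iter n sgS (iota x) = iota (iter n sg x).
Proof. by elim: n => //= n ->; rewrite comm. Qed.

Lemma root_unit (T : idomainType) m (x : T) : (0 < m)%N -> x ^+ m = 1 -> x \is a GRing.unit.
Proof.
move=> m0 h; apply/unitrP; exists (x ^+ m.-1).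
by rewrite -exprSr -exprS prednK.
Qed.

Lemma root_iter m n (x : R) : ~~ (p %| m)%N -> x ^+ m = 1 -> iter n sg x = x ^+ (p ^ n).
Proof.
move=> pm xm; elim: n => [|n IH]; first by rewrite expn0 expr1.
rewrite iterS IH rmorphXn /= (frob_root pp hpiR flR pm xm) -exprM expnSr mulnC.
by [].
Qed.

Lemma piK_q (k : K) : k ^+ q = k.
Proof. by rewrite -cardK expf_card. Qed.

Lemma iter2S j (x : R) : iter (2 * j.+1) sg x = sg (sg (iter (2 * j) sg x)).
Proof. by rewrite mulnS. Qed.

Lemma partA z1 x1 z2 x2 : adm z1 x1 -> adm z2 x2 -> z1 != z2 ->
  ~ dmod_iso sg sgi (MzF p x1) (MzV p sgi x1) (MzF p x2) (MzV p sgi x2).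
Proof.
move=> [z1r x1r n1] [z2r x2r n2] z12 [P [Q [PQ QP hF _]]].
have [a' [b [c [d eP]]]] : exists a' b c d, P = mx2 a' b c d.
  by exists (P i0 i0), (P i0 i1), (P i1 i0), (P i1 i1); exact: mx2_eta.
move: hF; rewrite eP /MzF map_mx2 !mulmx2 => /mx2_eq [e1 e2 e3 e4].
rewrite !(mul0r, mulr0, add0r, addr0, mul1r, mulr1) in e1 e2 e3 e4.
have q0 : (0 < q.-1)%N.
  by rewrite -ltnS prednK ?expn_gt0 ?prime_gt0 // -{1}(expn0 p) ltn_exp2l ?p_gt1 // muln_gt0 a0.
have u1 := root_unit q0 x1r; have u2 := root_unit q0 x2r.
have key : a' * x2 = x1 * sg (sg a').
  move: e2; rewrite e3 => e2.
  have := f_equal (fun t => t * (x1 * x2)) e2.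
  rewrite (_ : a' * (x1^-1 * p%:R) * (x1 * x2) = a' * x2 * p%:R * (x1^-1 * x1)); last by ring.
  rewrite (_ : x2^-1 * p%:R * sg (sg a') * (x1 * x2) = x1 * sg (sg a') * p%:R * (x2^-1 * x2)); last by ring.
  by rewrite !mulVr // !mulr1 => h; apply: (mulIf (pR_neq0 hR)); exact: h.
have keyj : forall j, iter (2 * j) sg a' * \prod_(i < j) iter (2 * i) sg x1 =
                      \prod_(i < j) iter (2 * i) sg x2 * a'.
  elim=> [|j IH]; first by rewrite !big_ord0 mulr1 mul1r.
  rewrite iter2S !big_ord_recr /=.
  have kj := f_equal (iter (2 * j) sg) key; rewrite !iterM in kj.
  have ee : iter (2 * j) sg (sg (sg a')) = sg (sg (iter (2 * j) sg a')).
    by rewrite -!iterSr.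
  rewrite ee in kj.
  set ta := iter (2 * j) sg a'.
  rewrite (_ : sg (sg ta) * (\prod_(i < j) iter (2 * i) sg x1 * iter (2 * j) sg x1) =
     (iter (2 * j) sg x1 * sg (sg ta)) * \prod_(i < j) iter (2 * i) sg x1); last by ring.
  rewrite -kj mulrAC IH; ring.
have ka := keyj a; rewrite n1 n2 in ka.
have pia : piR a' * (piR z1 - piR z2) = 0.
  have := f_equal piR ka; rewrite !rmorphM /= (frob_iter _ _ flR) piK_q.
  by move=> h; rewrite mulrBr h mulrC subrr.
move: pia => /eqP; rewrite mulf_eq0 => /orP [/eqP pa0 | ].
  have pid : piR d = 0 by rewrite e3 flR pa0 expr0n eqn0Ngt prime_gt0.
  have pib : piR b = 0 by rewrite e1 !rmorphM /= (pi_p hpiR) mulr0 mul0r.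
  have : \det P * \det Q = 1 by rewrite -det_mulmx PQ det1.
  move/(f_equal piR); rewrite rmorphM rmorph1 /= eP det_mx2 rmorphB !rmorphM /=.
  by rewrite pid pib !mul0r mulr0 subrr mul0r => /eqP; rewrite eq_sym oner_eq0.
rewrite subr_eq0 => /eqP e; move/negP: z12; apply; apply/eqP.
exact: (root_unity_eq pp hpiR p2_ndvd z1r z2r e).
Qed.


Definition ee := (\sum_(i < a) p ^ (2 * i))%N.

Lemma geo_e : ((p ^ 2).-1 * ee)%N = q.-1.
Proof.
rewrite /ee; elim: a => [|k IH]; first by rewrite big_ord0 muln0 muln0 expn0.
rewrite big_ord_recr /= mulnDr IH mulnS expnD.
have h1 : (1 <= p ^ (2 * k))%N by rewrite expn_gt0 prime_gt0.
have h2 : (1 <= p ^ 2)%N by rewrite expn_gt0 prime_gt0.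
rewrite addnC; move: h1 h2; set X := (p ^ (2 * k))%N; set Y := (p ^ 2)%N => h1 h2.
rewrite -!subn1; nia.
Qed.

Lemma q1_gt0 : (0 < q.-1)%N.
Proof.
by rewrite -ltnS prednK ?expn_gt0 ?prime_gt0 // -{1}(expn0 p) ltn_exp2l ?p_gt1 // muln_gt0 a0.
Qed.

Lemma p21_gt0 : (0 < (p ^ 2).-1)%N.
Proof. by rewrite -ltnS prednK ?expn_gt0 ?prime_gt0 // -{1}(expn0 p) ltn_exp2l ?p_gt1. Qed.

Lemma pi_norm (x : R) : piR (\prod_(i < a) iter (2 * i) sg x) = piR x ^+ ee.
Proof.
rewrite /ee; elim: a => [|k IH]; first by rewrite !big_ord0 rmorph1 expr0.
by rewrite !big_ord_recr /= rmorphM IH (frob_iter _ _ flR) exprD.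
Qed.

Lemma unit_swap (T : idomainType) (u v A B : T) : u \is a GRing.unit -> v \is a GRing.unit ->
  v * A = u * B -> A * u^-1 = v^-1 * B.
Proof.
move=> uu uv h.
by rewrite -[A](mulKr uv) h (mulrC u B) -!mulrA mulrV // mulr1.
Qed.

Lemma MzF_det (x : R) : x \is a GRing.unit -> \det (MzF p x) != 0.
Proof.
move=> ux; rewrite /MzF det_mx2 mul0r mulr1 sub0r oppr_eq0 mulf_eq0 negb_or.
by rewrite invr_eq0 (unit_neq0 ux) (pR_neq0 hR).
Qed.

Lemma MzFV (x : R) : x \is a GRing.unit ->
  MzF p x *m map_mx sg (MzV p sgi x) = (p%:R)%:M.
Proof.
move=> ux; rewrite /MzF /MzV map_mx2 mulmx2 mx2_scalar rmorph0 rmorph_nat sg2.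
by rewrite !(mul0r, mulr0, add0r, addr0, mul1r, mulr1) -mulrA mulrC -mulrA mulrV // mulr1.
Qed.

Lemma MFV : MF p R *m map_mx sg (MV p R) = (p%:R)%:M.
Proof.
rewrite /MF /MV map_mx2 mulmx2 mx2_scalar rmorph0 rmorph_nat rmorph1.
by rewrite !(mul0r, mulr0, add0r, addr0, mul1r, mulr1).
Qed.

Lemma partIndep z x1 x2 : adm z x1 -> adm z x2 ->
  dmod_iso sg sgi (MzF p x1) (MzV p sgi x1) (MzF p x2) (MzV p sgi x2).
Proof.
move=> [zr x1r n1] [_ x2r n2].
have u1 := root_unit q1_gt0 x1r; have u2 := root_unit q1_gt0 x2r.
have pu1 : piR x1 != 0 by rewrite -unitfE rmorph_unit.
have pu2 : piR x2 != 0 by rewrite -unitfE rmorph_unit.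
have e1 : piR x1 ^+ ee = piR x2 ^+ ee by rewrite -!pi_norm n1 n2.
set eta := piR x2 / piR x1.
have eta0 : eta != 0 by rewrite mulf_neq0 ?invr_eq0.
have etae : eta ^+ ee = 1 by rewrite /eta exprMn exprVn -e1 mulfV // expf_neq0.
have nm : ((p ^ 2).-1 * ee)%N = #|K|.-1 by rewrite geo_e cardK.
have [ab hab] := powsurj nm etae.
have ab0 : ab != 0.
  apply: contra_neq eta0 => a0'; rewrite -hab a0' expr0n.
  by have := p21_gt0; case: ((p ^ 2).-1).
have a2 : (0 < 2 * a)%N by rewrite muln_gt0 a0.
have [T [Tq piT]] := teich pp hR hpiR (N := (2 * a)%N) (k := ab) a2 (piK_q ab).
have T0 : T != 0 by apply: contra_neq ab0 => T0; rewrite -piT T0 rmorph0.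
have Tq1 : T ^+ q.-1 = 1.
  by apply: (mulfI T0); rewrite mulr1 -exprS prednK // expn_gt0 prime_gt0.
have uT := root_unit q1_gt0 Tq1.
have sT : sg (sg T) = T ^+ (p ^ 2) by rewrite -(root_iter 2 q_ndvd Tq1).
have hx : T ^+ (p ^ 2).-1 * x1 = x2.
  apply: (root_unity_eq pp hpiR q_ndvd).
  - by rewrite exprMn -exprM mulnC exprM Tq1 expr1n x1r mul1r.
  - exact: x2r.
  by rewrite rmorphM rmorphXn /= piT hab /eta mulrVK // unitfE.
have sw : T * x1^-1 = x2^-1 * sg (sg T).
  apply: unit_swap => //; rewrite sT -hx mulrAC -exprSr prednK //.
    by rewrite mulrC.
  by rewrite expn_gt0 prime_gt0.
have usT : sg T \is a GRing.unit by rewrite rmorph_unit.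
exists (mx2 T 0 0 (sg T)), (mx2 T^-1 0 0 (sg T)^-1).
have hF : mx2 T 0 0 (sg T) *m MzF p x1 = MzF p x2 *m map_mx sg (mx2 T 0 0 (sg T)).
  rewrite /MzF map_mx2 !mulmx2 rmorph0 !(mul0r, mulr0, add0r, addr0, mul1r, mulr1).
  by rewrite mulrA sw mulrAC.
split.
- by rewrite mulmx2 mx2_1 !(mul0r, mulr0, add0r, addr0) !mulrV.
- by rewrite mulmx2 mx2_1 !(mul0r, mulr0, add0r, addr0) !mulVr.
- exact: hF.
apply: (FtoV sg1 sg2 (MzFV u1) (MzFV u2) (MzF_det u2) hF).
Qed.

Lemma map_iota_comm m n (X : 'M[R]_(m, n)) :
  map_mx sgS (map_mx iota X) = map_mx iota (map_mx sg X).
Proof. by apply/matrixP => i j; rewrite !mxE comm. Qed.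

Lemma iter_swap (T : Type) (f : T -> T) n x : iter n f (f x) = f (iter n f x).
Proof. by rewrite -iterSr. Qed.

Lemma pS_neq0 : (p%:R : S) != 0. Proof. exact: pR_neq0 hS. Qed.

Lemma partB z x : adm z x ->
  twist sgS sgSi (iter (2 * a) sgS) (map_mx iota (MF p R)) (map_mx iota (MV p R))
       (map_mx iota (MzF p x)) (map_mx iota (MzV p sgi x))
       (mx2 (iota z) 0 0 (iota (sg z))).
Proof.
move=> [zr xr nx].
have ux := root_unit q1_gt0 xr.
set ix := iota x.
have uix : ix \is a GRing.unit by rewrite rmorph_unit.
have pix : piS ix != 0 by rewrite -unitfE rmorph_unit.
have [ab hab] := closed_root (piS ix) p21_gt0.
set M := ((p ^ 2).-1 * q.-1)%N.
have M0 : (0 < M)%N by rewrite muln_gt0 p21_gt0 q1_gt0.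
have cpM : coprime p M by rewrite prime_coprime // Euclid_dvdM // negb_or p2_ndvd q_ndvd.
set N := totient M.
have N0 : (0 < N)%N by rewrite totient_gt0.
have pN1 : (1 <= p ^ N)%N by rewrite expn_gt0 prime_gt0.
have MpN : (M %| (p ^ N).-1)%N.
  by rewrite -subn1 -eqn_mod_dvd // Euler_exp_totient.
have abM : ab ^+ M = 1 by rewrite exprM hab -rmorphXn /ix -rmorphXn xr !rmorph1.
have abN : ab ^+ (p ^ N) = ab.
  have [k hk] := dvdnP MpN.
  by rewrite -(prednK pN1) exprS hk mulnC exprM abM expr1n mulr1.
have [T [TN piT]] := teich pp hS hpiS N0 abN.
have ab0 : ab != 0.
  by apply: contra_neq pix => ab0; rewrite -hab ab0 expr0n; case: ((p ^ 2).-1) p21_gt0.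
have T0 : T != 0 by apply: contra_neq ab0 => T0; rewrite -piT T0 rmorph0.
have TN1 : T ^+ (p ^ N).-1 = 1.
  by apply: (mulfI T0); rewrite mulr1 -exprS prednK.
have ndN : ~~ (p %| (p ^ N).-1)%N by apply: ndvd_predX.
have sT : sgS T = T ^+ p := frob_root pp hpiS flS ndN TN1.
have ssT : sgS (sgS T) = T * ix.
  have hx : T ^+ (p ^ 2).-1 = ix.
    apply: (root_unity_eq pp hpiS ndN).
    - by rewrite -exprM mulnC exprM TN1 expr1n.
    - have [k hk] := dvdnP MpN; rewrite hk /M mulnA exprM.
      by rewrite -exprM mulnC exprM /ix -rmorphXn xr rmorph1 expr1n.
    by rewrite rmorphXn /= piT hab.
  by rewrite sT rmorphXn /= sT -exprM mulnn -hx -exprS prednK ?expn_gt0 ?prime_gt0.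
have frT : forall j, iter (2 * j) sgS T = T * \prod_(i < j) iter (2 * i) sgS ix.
  elim=> [|j IH]; first by rewrite big_ord0 mulr1.
  rewrite mulnS /= -!iter_swap.
  have -> : iter (2 * j) sgS (sgS (sgS T)) = iter (2 * j) sgS T * iter (2 * j) sgS ix.
    by rewrite ssT iterM.
  by rewrite IH big_ord_recr /= mulrA.
have frTa : iter (2 * a) sgS T = T * iota z.
  rewrite frT -nx rmorph_prod; congr (_ * _); apply: eq_bigr => i _.
  by rewrite iter_comm.
have frsT : iter (2 * a) sgS (sgS T) = sgS T * iota (sg z).
  by rewrite iter_swap frTa rmorphM /= comm.
have pN2 : (0 < (p ^ N).-1)%N.
  rewrite -ltnS prednK // -{1}(expn0 p) ltn_exp2l //; exact: p_gt1.
have uT : T \is a GRing.unit := root_unit pN2 TN1.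
have usT : sgS T \is a GRing.unit by rewrite rmorph_unit.
have eMF : map_mx iota (MF p R) = mx2 0 p%:R 1 0.
  by rewrite /MF map_mx2 rmorph0 rmorph1 rmorph_nat.
have eMzF : map_mx iota (MzF p x) = mx2 0 (ix^-1 * p%:R) 1 0.
  by rewrite /MzF map_mx2 rmorph0 rmorph1 rmorphM rmorph_nat /= rmorphV.
exists (mx2 T 0 0 (sgS T)), (mx2 T^-1 0 0 (sgS T)^-1).
have hF : mx2 T 0 0 (sgS T) *m map_mx iota (MF p R) =
          map_mx iota (MzF p x) *m map_mx sgS (mx2 T 0 0 (sgS T)).
  rewrite eMF eMzF map_mx2 !mulmx2 rmorph0 !(mul0r, mulr0, add0r, addr0, mul1r, mulr1).
  by rewrite ssT; congr mx2; rewrite -[LHS](mulKr uix); ring.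
split.
- by rewrite mulmx2 mx2_1 !(mul0r, mulr0, add0r, addr0) !mulrV.
- by rewrite mulmx2 mx2_1 !(mul0r, mulr0, add0r, addr0) !mulVr.
- exact: hF.
- apply: (FtoV (c := p%:R) sgS1 sgS2 _ _ _ hF).
  + by rewrite map_iota_comm -map_mxM MFV map_scalar_mx rmorph_nat.
  + by rewrite map_iota_comm -map_mxM (MzFV ux) map_scalar_mx rmorph_nat.
  + rewrite eMzF det_mx2 mul0r mulr1 sub0r oppr_eq0 mulf_neq0 //.
    by rewrite invr_eq0 unit_neq0.
    exact: pS_neq0.
rewrite map_mx2 frTa frsT !iter0 mulmx2 !(mul0r, mulr0, add0r, addr0).
by rewrite !mulKr.
Qed.

Lemma iota_pdvd n (w : R) : pdvd p n w -> pdvd p n (iota w).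
Proof. by move=> [v ->]; exists (iota v); rewrite rmorphM rmorphXn rmorph_nat. Qed.

Lemma jwd (r : R) : piR r = 0 -> piS (iota r) = 0.
Proof. by move=> /(pi0 hpiR) h; apply/(pi0 hpiS); apply: iota_pdvd. Qed.

Lemma jinj (r : R) : piS (iota r) = 0 -> piR r = 0.
Proof.
move=> h; apply/eqP; apply: contraLR (introT eqP h) => hr.
have ur := pdvd1_unit hR hpiR hr.
by rewrite -unitfE !rmorph_unit.
Qed.

Lemma j_eq (r1 r2 : R) : piR r1 = piR r2 -> piS (iota r1) = piS (iota r2).
Proof.
move=> h; apply/eqP; rewrite -subr_eq0 -!rmorphB; apply/eqP; apply: jwd.
by rewrite rmorphB h subrr.
Qed.

Lemma j_eq_inv (r1 r2 : R) : piS (iota r1) = piS (iota r2) -> piR r1 = piR r2.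
Proof.
move=> h; apply/eqP; rewrite -subr_eq0 -!rmorphB; apply/eqP; apply: jinj.
by rewrite !rmorphB h subrr.
Qed.

Lemma iota_inj : injective iota.
Proof.
move=> r1 r2 h; apply/eqP; rewrite -subr_eq0; apply/eqP.
have h0 : iota (r1 - r2) = 0 by rewrite rmorphB h subrr.
move: (r1 - r2) h0 => r h0; apply: (eq_sep hR) => n; rewrite subr0.
elim: n => [|n [w hw]]; first exact: pdvd0.
have : iota w = 0.
  move: h0; rewrite hw rmorphM rmorphXn rmorph_nat => /eqP; rewrite mulf_eq0.
  by rewrite expf_eq0 (negbTE pS_neq0) andbF => /eqP.
move=> /(f_equal piS); rewrite rmorph0 => /jinj /(pi0 hpiR) [v hv].
by exists v; rewrite hw hv mulrA -exprSr.
Qed.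

Lemma a2_gt0 : (0 < 2 * a)%N.
Proof. by rewrite muln_gt0 a0. Qed.

Lemma q_gt1 : (1 < q)%N.
Proof. by rewrite -{1}(expn0 p) ltn_exp2l ?p_gt1 // muln_gt0 a0. Qed.

Lemma resid_img (y : S) : piS y ^+ q = piS y -> exists r : R, piS (iota r) = piS y.
Proof.
move=> yq.
have surjR : forall k : K, exists x : R, piR x == k.
  by move=> k; case: hpiR => surj _; have [x hx] := surj k; exists x; rewrite hx.
pose lift (k : K) := xchoose (surjR k).
have liftE k : piR (lift k) = k by apply/eqP; exact: xchooseP (surjR k).
pose jf k := piS (iota (lift k)).
case hin: (piS y \in [seq jf k | k <- enum K]).
  by move/mapP: hin => [k _ ->]; exists (lift k).
exfalso.
pose P : {poly L} := 'X^q - 'X.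
have szP : size P = q.+1.
  rewrite /P size_polyDl size_polyXn // size_polyN size_polyX; exact: q_gt1.
have P0 : P != 0 by rewrite -size_poly_eq0 szP.
have rootP (t : L) : t ^+ q = t -> root P t by move=> h; rewrite /root !hornerE h subrr.
have hall : all (root P) (piS y :: [seq jf k | k <- enum K]).
  rewrite /= rootP //=; apply/allP => t /mapP [k _ ->]; apply: rootP.
  rewrite /jf -rmorphXn -rmorphXn; apply: j_eq; by rewrite rmorphXn liftE piK_q.
have hu : uniq (piS y :: [seq jf k | k <- enum K]).
  rewrite /= hin map_inj_uniq ?enum_uniq //.
  by move=> k1 k2 /j_eq_inv; rewrite !liftE.
have := max_poly_roots P0 hall hu.
by rewrite /= szP size_map -cardE cardK ltnn.
Qed.

Lemma fixedR (T : R) : T ^+ q = T -> iter (2 * a) sg T = T.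
Proof.
move=> hT; have [->|T0] := eqVneq T 0; first by rewrite iter0.
have Tq1 : T ^+ q.-1 = 1.
  by apply: (mulfI T0); rewrite mulr1 -exprS prednK // ltnW // q_gt1.
by rewrite (root_iter _ q_ndvd Tq1).
Qed.

Lemma descent_step (x : S) n (r : R) : iter (2 * a) sgS x = x ->
  iter (2 * a) sg r = r -> pdvd p n (x - iota r) ->
  exists r', [/\ iter (2 * a) sg r' = r', pdvd p n (r' - r) & pdvd p n.+1 (x - iota r')].
Proof.
move=> fx fr [y hy].
have fy : iter (2 * a) sgS y = y.
  have e : iter (2 * a) sgS (p%:R ^+ n * y) = p%:R ^+ n * y.
    by rewrite -hy iterD iterN iter_comm fr fx.
  rewrite iterM iterX iter_nat in e; exact: (mulfI (pRX_neq0 hS n)) e.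
have yq : piS y ^+ q = piS y by rewrite -(frob_iter _ _ flS) fy.
have [r0 hr0] := resid_img yq.
have [T [Tq piT]] := teich pp hR hpiR (N := (2 * a)%N) (k := piR r0) a2_gt0 (piK_q _).
exists (r + p%:R ^+ n * T); split.
- by rewrite iterD iterM iterX iter_nat fr (fixedR Tq).
- by rewrite addrC addKr; exact: pdvd_pXx.
have -> : x - iota (r + p%:R ^+ n * T) = p%:R ^+ n * (y - iota T).
  by rewrite rmorphD rmorphM rmorphXn rmorph_nat opprD addrA hy mulrBr.
rewrite -addn1; apply: pdvd_pX; apply/(pi_eq hpiS).
by rewrite -hr0; apply: j_eq.
Qed.

Lemma descent (x : S) : iter (2 * a) sgS x = x -> exists r, x = iota r.
Proof.
move=> fx.
pose P n r := iter (2 * a) sg r = r /\ pdvd p n (x - iota r).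
have st : forall n r, P n r -> {r' | P n.+1 r' /\ pdvd p n (r' - r)}.
  move=> n r [h1 h2]; apply: constructive_indefinite_description.
  have [r' [e1 e2 e3]] := descent_step fx h1 h2.
  by exists r'.
have h0 : P 0%N 0 by split; [exact: iter0 | exact: pdvd0].
pose sq := nat_rect (fun n => {r | P n r}) (exist _ 0 h0)
  (fun n s => exist _ (sval (st n (sval s) (svalP s))) (proj1 (svalP (st n (sval s) (svalP s))))).
have cauchy : forall n, pdvd p n (sval (sq n.+1) - sval (sq n)).
  by move=> n; rewrite /=; exact: (proj2 (svalP (st n (sval (sq n)) (svalP (sq n))))).
have [r hr] := plim hR cauchy.
exists r; apply: (eq_sep hS) => n.
have -> : x - iota r = (x - iota (sval (sq n))) - iota (r - sval (sq n)).
  by rewrite rmorphB opprB addrA subrK.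
apply: pdvdB; first exact: (proj2 (svalP (sq n))).
exact: iota_pdvd.
Qed.

Definition MbF := map_mx iota (MF p R).

Lemma eMbF : MbF = mx2 0 p%:R 1 0.
Proof. by rewrite /MbF /MF map_mx2 rmorph0 rmorph1 rmorph_nat. Qed.

Definition FC (X : 'M[S]_2) := X *m MbF = MbF *m map_mx sgS X.

Lemma FC_form (X : 'M[S]_2) : FC X ->
  [/\ X i0 i1 = p%:R * sgS (X i1 i0), X i1 i1 = sgS (X i0 i0),
      sgS (sgS (X i0 i0)) = X i0 i0 & sgS (sgS (X i1 i0)) = X i1 i0].
Proof.
rewrite /FC eMbF (mx2_eta X) map_mx2 !mulmx2 !mx2E00 !mx2E01 !mx2E10 !mx2E11.
move=> /mx2_eq [e1 e2 e3 e4].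
rewrite !(mul0r, mulr0, add0r, addr0, mul1r, mulr1) in e1 e2 e3 e4.
have e2' : X i0 i0 = sgS (X i1 i1) by apply: (mulIf pS_neq0); rewrite e2 mulrC.
split => //.
- by rewrite -e3 -e2'.
- by apply: (mulIf pS_neq0); rewrite e4 e1 rmorphM rmorph_nat mulrC.
Qed.

Lemma FC_lev (X : 'M[S]_2) : FC X -> lev p 0 1 0 0 X.
Proof.
move=> /FC_form [e1 _ _ _]; split; try exact: pdvd0.
by rewrite e1; exists (sgS (X i1 i0)); rewrite expr1.
Qed.

Lemma FC_mul (X Y : 'M[S]_2) : FC X -> FC Y -> FC (X *m Y).
Proof. by rewrite /FC => hX hY; rewrite -mulmxA hY !mulmxA hX map_mxM mulmxA. Qed.

Lemma FC_add (X Y : 'M[S]_2) : FC X -> FC Y -> FC (X + Y).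
Proof. by rewrite /FC => hX hY; rewrite mulmxDl hX hY map_mxD mulmxDr. Qed.

Lemma FC_0 : FC 0.
Proof. by rewrite /FC mul0mx map_mx0 mulmx0. Qed.

Lemma FC_1 : FC 1.
Proof. by rewrite /FC map_mx1 mulmx1 mul1mx. Qed.

Lemma FC_exp (X : 'M[S]_2) j : FC X -> FC (X ^+ j).
Proof.
move=> hX; elim: j => [|j IH]; first exact: FC_1.
by rewrite exprS -mulmxE; apply: FC_mul.
Qed.

Lemma FC_sum n (F : 'I_n -> 'M[S]_2) : (forall i, FC (F i)) -> FC (\sum_(i < n) F i).
Proof.
move=> h; elim/big_ind: _ => //; [exact: FC_0 | exact: FC_add].
Qed.

Lemma iter2_fix (e : S) j : sgS (sgS e) = e -> iter (2 * j) sgS e = e.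
Proof. by move=> h; elim: j => [|j IH] //; rewrite mulnS /= -!iter_swap h IH. Qed.

Lemma FC_fr (X : 'M[S]_2) : FC X -> map_mx (iter (2 * a) sgS) X = X.
Proof.
move=> hX; have [e1 e2 e3 e4] := FC_form hX.
apply/matrixP => i j; rewrite mxE; apply: iter2_fix.
case: (ord2P i) => ->; case: (ord2P j) => ->.
- exact: e3.
- by rewrite e1 !rmorphM !rmorph_nat e4.
- exact: e4.
- by rewrite e2 e3.
Qed.

Lemma map_iterS (f : {rmorphism S -> S}) n m k (Z : 'M[S]_(m, k)) :
  map_mx (iter n.+1 f) Z = map_mx f (map_mx (iter n f) Z).
Proof. by apply/matrixP => i j; rewrite !mxE. Qed.

Lemma map_iterM (f : {rmorphism S -> S}) n m k l (X : 'M[S]_(m, k)) (Y : 'M[S]_(k, l)) :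
  map_mx (iter n f) (X *m Y) = map_mx (iter n f) X *m map_mx (iter n f) Y.
Proof.
elim: n => [|n IH].
  have e : forall m' k' (Z : 'M[S]_(m', k')), map_mx (iter 0 f) Z = Z.
    by move=> m' k' Z; apply/matrixP => i j; rewrite mxE.
  by rewrite !e.
by rewrite !map_iterS IH map_mxM.
Qed.

Lemma map_iter1 (f : {rmorphism S -> S}) n m : map_mx (iter n f) (1%:M : 'M[S]_m) = 1%:M.
Proof.
elim: n => [|n IH]; first by apply/matrixP => i j; rewrite mxE.
by rewrite map_iterS IH map_mx1.
Qed.

Lemma mx_descent m k (X : 'M[S]_(m, k)) : map_mx (iter (2 * a) sgS) X = X ->
  exists X0 : 'M[R]_(m, k), X = map_mx iota X0.
Proof.
move=> hX.
have h : forall i j, exists r, X i j = iota r.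
  move=> i j; apply: descent; move/matrixP: hX => /(_ i j); rewrite mxE; exact.
exists (\matrix_(i, j) proj1_sig (constructive_indefinite_description _ (h i j))).
apply/matrixP => i j; rewrite !mxE.
exact: (proj2_sig (constructive_indefinite_description _ (h i j))).
Qed.

Lemma map_iota_inj m k : injective (@map_mx _ _ iota m k).
Proof.
move=> X Y /matrixP h; apply/matrixP => i j; have := h i j; rewrite !mxE.
exact: iota_inj.
Qed.

Lemma norm_pow (x : R) : x ^+ q.-1 = 1 -> \prod_(i < a) iter (2 * i) sg x = x ^+ ee.
Proof.
move=> xq; rewrite /ee; elim: a => [|k IH]; first by rewrite !big_ord0 expr0.
by rewrite !big_ord_recr /= IH (root_iter _ q_ndvd xq) exprD.
Qed.

Lemma diag_exp (s t : S) j : (mx2 s 0 0 t) ^+ j = mx2 (s ^+ j) 0 0 (t ^+ j).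
Proof.
elim: j => [|j IH]; first by rewrite !expr0 mx2_1r.
by rewrite exprS IH -mulmxE mulmx2 !(mul0r, mulr0, add0r, addr0) -!exprS.
Qed.

Lemma reduce_order (u : 'M[S]_2) k : (4 < p)%N -> FC u -> (0 < k)%N -> u ^+ k = 1 ->
  exists k', [/\ ~~ (p %| k')%N, (0 < k')%N & u ^+ k' = 1].
Proof.
move=> p4 hu k0 uk.
have [k' ck' hk] := pfactor_coprime pp k0.
have k'0 : (0 < k')%N by move: k0; rewrite hk muln_gt0 => /andP [].
exists k'; split => //; first by rewrite -prime_coprime.
move: uk; rewrite hk; elim: (logn p k) => [|e IH]; first by rewrite expn0 muln1.
rewrite expnSr mulnA exprM => h; apply: IH.
apply: (torsion pp hS hpiS p4) => //; apply: FC_lev; exact: FC_exp.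
Qed.

Lemma partC : (3 < p)%N ->
     forall (n : nat) (A B : 'M[R]_n) (u : 'M[S]_2),
       dieud p sg sgi A B ->
       dmod_aut_fin sgS sgSi (map_mx iota (MF p R)) (map_mx iota (MV p R)) u ->
       twist sgS sgSi (iter (2 * a) sgS) (map_mx iota (MF p R)) (map_mx iota (MV p R))
         (map_mx iota A) (map_mx iota B) u ->
       exists z x, adm z x /\
         dmod_iso sg sgi (MzF p x) (MzV p sgi x) A B.
Proof.
move=> p3 n A B u [hA hB] [uu uF uV [k [k0 uk]]] [phi [psi [pp1 pp2 phF phV fr_u]]].
have p4 : (4 < p)%N.
  have : p != 4%N by apply/eqP => h; move: pp; rewrite h.
  by move: p3; rewrite leq_eqVlt => /orP [/eqP <- //|]; rewrite ltn_neqAle => ->.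
have hu : FC u by exact: uF.
have [k' [pk' k'0 uk']] := reduce_order p4 hu k0 uk.
set a00 := u i0 i0.
set pia := piS a00.
have [hu1 hu2 hu3 hu4] := FC_form hu.
have [pk1 pk2] := pi00X hpiS k' (FC_lev hu).
rewrite uk' mx2_1r mx2E00 mx2E11 rmorph1 in pk1 pk2.
have pia0 : pia != 0.
  apply/eqP => h; move: pk1; rewrite -/a00 -/pia h expr0n.
  by case: k' k'0 {pk' uk' pk2} => // k'' _ /eqP; rewrite oner_eq0.
have piap2 : pia ^+ (p ^ 2) = pia.
  by rewrite -(frob_iter 2 _ flS) /= /pia -/a00 hu3.
have piap21 : pia ^+ (p ^ 2).-1 = 1.
  by apply: (mulfI pia0); rewrite mulr1 -exprS prednK ?expn_gt0 ?prime_gt0.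
have piaq : pia ^+ q = pia.
  by rewrite -(prednK (ltnW q_gt1)) exprS -geo_e exprM piap21 expr1n mulr1.
have [r0 hr0] := resid_img piaq.
have k0e : (piR r0) ^+ (p ^ 2).-1 = 1.
  rewrite -rmorphXn -(rmorph1 piR); apply: j_eq_inv.
  by rewrite !rmorphXn /= hr0 piap21 !rmorph1.
have nm : (ee * (p ^ 2).-1)%N = #|K|.-1 by rewrite mulnC geo_e cardK.
have [xb hxb] := powsurj nm k0e.
have kr0 : piR r0 != 0.
  apply/eqP => h; move: k0e; rewrite h expr0n.
  by case: ((p ^ 2).-1) p21_gt0 => // k'' _ /eqP; rewrite eq_sym oner_eq0.
have ee0 : (0 < ee)%N.
  by move: q1_gt0; rewrite -geo_e muln_gt0 => /andP [].
have xb0 : xb != 0.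
  by apply: contra_neq kr0 => h; rewrite -hxb h expr0n; case: ee ee0.
have [xi [xiq pixi]] := teich pp hR hpiR (N := (2 * a)%N) (k := xb) a2_gt0 (piK_q _).
have xi0 : xi != 0 by apply: contra_neq xb0 => h; rewrite -pixi h rmorph0.
have xiq1 : xi ^+ q.-1 = 1.
  by apply: (mulfI xi0); rewrite mulr1 -exprS prednK // ltnW // q_gt1.
set z := \prod_(i < a) iter (2 * i) sg xi.
have ez : z = xi ^+ ee by exact: norm_pow.
have zp : z ^+ (p ^ 2).-1 = 1 by rewrite ez -exprM mulnC geo_e.
have hadm : adm z xi by split.
have piz : piS (iota z) = pia.
  by rewrite /pia -hr0; apply: j_eq; rewrite ez rmorphXn pixi hxb.
have [phx [psx [h1 h2 h3 h4 h5]]] := partB hadm.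
set D := mx2 (iota z) 0 0 (iota (sg z)) in h5.
have ssz : sg (sg z) = z.
  have := root_iter 2 p2_ndvd zp; rewrite /= => ->.
  by rewrite -[(p ^ 2)%N](@prednK _) ?expn_gt0 ?prime_gt0 // exprS zp mulr1.
have hD : FC D.
  rewrite /FC eMbF /D map_mx2 !mulmx2 !(mul0r, mulr0, add0r, addr0, mul1r, mulr1) rmorph0.
  by rewrite mulr0 !comm ssz mulrC.
set m := (k' * (p ^ 2).-1)%N.
have m0 : (0 < m)%N by rewrite muln_gt0 k'0 p21_gt0.
have pm : ~~ (p %| m)%N by rewrite Euclid_dvdM // negb_or pk' p2_ndvd.
have um : u ^+ m = 1 by rewrite exprM uk' expr1n.
have Dm : D ^+ m = 1.
  have e1 : iota z ^+ (p ^ 2).-1 = 1 by rewrite -rmorphXn zp rmorph1.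
  have e2 : iota (sg z) ^+ (p ^ 2).-1 = 1 by rewrite -!rmorphXn zp !rmorph1.
  by rewrite /D diag_exp mx2_1r /m mulnC !exprM e1 e2 !expr1n.
pose f (j : nat) := u ^+ j * D ^+ ((m.-1) * j).
pose g := \sum_(j < m) f j.
have fFC j : FC (f j) by rewrite /f -mulmxE; apply: FC_mul; apply: FC_exp.
have gFC : FC g by apply: FC_sum => j; exact: fFC.
have shift : \sum_(j < m) f j.+1 = g.
  have e1 := big_ord_recl m (fun j => f j).
  have e2 := big_ord_recr m (fun j => f j).
  have fm : f m = f 0%N.
    by rewrite /f um muln0 !expr0 mulnC exprM Dm expr1n.
  apply: (addrI (f 0%N)); rewrite /g.
  have -> : \sum_(j < m) f j.+1 = \sum_(j < m) f (bump 0 j).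
    by apply: eq_bigr => j _; rewrite /bump leq0n add1n.
  by rewrite -e1 e2 fm addrC.
have ugD : u * g * D ^+ m.-1 = g.
  rewrite -[RHS]shift /g mulr_sumr mulr_suml; apply: eq_bigr => j _.
  by rewrite /f mulrA -exprS -mulrA -exprD mulnS addnC.
have ug : u * g = g * D.
  by rewrite -{2}ugD -mulrA -exprSr prednK // Dm mulr1.
have levu := FC_lev hu; have levD := FC_lev hD.
have piam : pia ^+ m = 1 by rewrite /m mulnC exprM piap21 expr1n.
have pf j : piS (f j i0 i0) = 1 /\ piS (f j i1 i1) = 1.
  have [e1 e2] := pi00M hpiS (lev0_exp j levu) (lev0_exp (m.-1 * j) levD).
  have [e3 e4] := pi00X hpiS j levu.
  have [e5 e6] := pi00X hpiS (m.-1 * j) levD.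
  rewrite /f -mulmxE e1 e2 e3 e4 e5 e6 /D mx2E00 mx2E11 [piS (iota z)]piz hu2 -comm !flS piz.
  rewrite -/a00 -/pia; split.
    by rewrite -exprD -mulSn prednK // exprM piam expr1n.
  by rewrite -exprD -mulSn prednK // -exprM mulnCA exprM piam expr1n.
have pg0 : piS (g i0 i0) = m%:R.
  rewrite /g summxE rmorph_sum (eq_bigr (fun _ => 1)); last by move=> j _; case: (pf j).
  by rewrite sumr_const card_ord.
have pg1 : piS (g i1 i1) = m%:R.
  rewrite /g summxE rmorph_sum (eq_bigr (fun _ => 1)); last by move=> j _; case: (pf j).
  by rewrite sumr_const card_ord.
have dg : \det g \is a GRing.unit.
  apply: (pdvd1_unit hS hpiS).
  have [_ g01 _ _] := FC_lev gFC.
  rewrite (mx2_eta g) det_mx2 rmorphB !rmorphM /= pg0 pg1 (pi_pdvd hpiS _ g01) // mul0r subr0.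
  by rewrite mulf_neq0 // -(dvdn_pcharf (pcharF pp hpiS)).
have ug' : g \in unitmx by rewrite unitmxE.
set fr := iter (2 * a) sgS in fr_u h5 *.
set gi := invmx g.
have ggi : g *m gi = 1%:M by rewrite mulmxV.
have gig : gi *m g = 1%:M by rewrite mulVmx.
have frphi : map_mx fr phi = phi *m u by rewrite -fr_u mulmxA pp1 mul1mx.
have frphx : map_mx fr phx = phx *m D by rewrite -h5 mulmxA h1 mul1mx.
have frpsx : D *m map_mx fr psx = psx.
  have e : map_mx fr phx *m map_mx fr psx = 1%:M by rewrite -map_iterM h1 map_iter1.
  rewrite frphx -mulmxA in e.
  by rewrite -[LHS]mul1mx -h2 -mulmxA e mulmx1.
have frpsi : u *m map_mx fr psi = psi.
  have e : map_mx fr phi *m map_mx fr psi = 1%:M by rewrite -map_iterM pp1 map_iter1.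
  rewrite frphi -mulmxA in e.
  by rewrite -[LHS]mul1mx -pp2 -mulmxA e mulmx1.
have frg : map_mx fr g = g by exact: FC_fr gFC.
have frgi : map_mx fr gi = gi.
  have e : map_mx fr g *m map_mx fr gi = 1%:M by rewrite -map_iterM ggi map_iter1.
  rewrite frg in e.
  by rewrite -[LHS]mul1mx -gig -mulmxA e mulmx1.
have ugm : u *m g = g *m D by rewrite !mulmxE.
have Dgi : D *m gi = gi *m u.
  by rewrite -[LHS]mul1mx -gig -mulmxA (mulmxA g) -ugm -(mulmxA u) ggi mulmx1.
set P := phi *m g *m psx.
set Q := phx *m gi *m psi.
have PQ : P *m Q = 1%:M.
  rewrite /P /Q -!mulmxA (mulmxA psx) h2 mul1mx (mulmxA g) ggi mul1mx pp1 //.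
have QP : Q *m P = 1%:M.
  rewrite /P /Q -!mulmxA (mulmxA psi) pp2 mul1mx (mulmxA gi) gig mul1mx h1 //.
have frP : map_mx fr P = P.
  rewrite /P !map_iterM frphi frg -(mulmxA phi) ugm (mulmxA phi g D).
  by rewrite -(mulmxA (phi *m g) D) frpsx.
have frQ : map_mx fr Q = Q.
  rewrite /Q !map_iterM frphx frgi -(mulmxA phx) Dgi (mulmxA phx gi u).
  by rewrite -(mulmxA (phx *m gi) u) frpsi.
have psxF : psx *m map_mx iota (MzF p xi) = MbF *m map_mx sgS psx.
  have e : map_mx sgS phx *m map_mx sgS psx = 1%:M by rewrite -map_mxM h1 map_mx1.
  rewrite -[LHS]mulmx1 -e mulmxA -(mulmxA psx) -h3 mulmxA h2 mul1mx //.
have PF : P *m map_mx iota (MzF p xi) = map_mx iota A *m map_mx sgS P.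
  rewrite /P -mulmxA psxF mulmxA -(mulmxA phi) gFC mulmxA phF !map_mxM !mulmxA //.
have [P0 eP] := mx_descent frP.
have [Q0 eQ] := mx_descent frQ.
have uxi : xi \is a GRing.unit := root_unit q1_gt0 xiq1.
have P0F : P0 *m MzF p xi = A *m map_mx sg P0.
  apply: map_iota_inj; rewrite !map_mxM -eP -map_iota_comm -eP; exact: PF.
have dA : \det A != 0.
  apply/eqP => h; have := f_equal determinant hA.
  rewrite det_mulmx h mul0r det_scalar => /eqP; rewrite eq_sym expf_eq0 (negbTE (pR_neq0 hR)) andbF //.
exists z, xi; split => //.
exists P0, Q0; split.
- by apply: map_iota_inj; rewrite map_mxM -eP -eQ PQ map_mx1.
- by apply: map_iota_inj; rewrite map_mxM -eP -eQ QP map_mx1.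
- exact: P0F.
exact: (FtoV (c := p%:R) sg1 sg2 (MzFV uxi) hA dA P0F).
Qed.

End Main.

Unset Implicit Arguments.

Theorem proposition7p2 (p a : nat)
  (R S : idomainType) (K : finFieldType) (L : closedFieldType)
  (piR : {rmorphism R -> K}) (piS : {rmorphism S -> L})
  (sg : {rmorphism R -> R}) (sgi : R -> R)
  (sgS : {rmorphism S -> S}) (sgSi : S -> S)
  (iota : {rmorphism R -> S}) :
  prime p -> (0 < a)%N -> #|K| = (p ^ (2 * a))%N ->
  strict_p_ring p R -> residue_map p piR ->
  strict_p_ring p S -> residue_map p piS ->
  cancel sg sgi -> cancel sgi sg -> frob_lift p piR sg ->
  cancel sgS sgSi -> cancel sgSi sgS -> frob_lift p piS sgS ->
  (forall x : R, sgS (iota x) = iota (sg x)) ->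
  let q := (p ^ (2 * a))%N in
  let admissible (zeta xi : R) :=
    [/\ zeta ^+ (p ^ 2).-1 = 1, xi ^+ q.-1 = 1
      & \prod_(i < a) iter (2 * i) sg xi = zeta] in
  let Mb_F := map_mx iota (MF p R) in
  let Mb_V := map_mx iota (MV p R) in
  let frq := iter (2 * a) sgS in
  (* (a) pairwise non-isomorphic *)
  (forall z1 x1 z2 x2, admissible z1 x1 -> admissible z2 x2 -> z1 != z2 ->
     ~ dmod_iso sg sgi (MzF p x1) (MzV p sgi x1) (MzF p x2) (MzV p sgi x2))
  (* isomorphism class independent of the choice of xi *)
  /\ (forall z x1 x2, admissible z x1 -> admissible z x2 ->
     dmod_iso sg sgi (MzF p x1) (MzV p sgi x1) (MzF p x2) (MzV p sgi x2))
  (* (b) M_zeta is the twist of M by x |-> zeta x, y |-> zeta^sigma y *)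
  /\ (forall z x, admissible z x ->
     twist sgS sgSi frq Mb_F Mb_V
       (map_mx iota (MzF p x)) (map_mx iota (MzV p sgi x))
       (mx2 (iota z) 0 0 (iota (sg z))))
  (* (c) for p > 3 every twist is some M_zeta *)
  /\ ((3 < p)%N ->
     forall (n : nat) (A B : 'M[R]_n) (u : 'M[S]_2),
       dieud p sg sgi A B ->
       dmod_aut_fin sgS sgSi Mb_F Mb_V u ->
       twist sgS sgSi frq Mb_F Mb_V (map_mx iota A) (map_mx iota B) u ->
       exists z x, admissible z x /\
         dmod_iso sg sgi (MzF p x) (MzV p sgi x) A B).
Proof.
move=> pp a0 cK hR hpiR hS hpiS sg1 sg2 flR sgS1 sgS2 flS comm q adm' MbF' MbV' frq.
split; [|split; [|split]].
- move=> z1 x1 z2 x2 h1 h2 hz.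
  exact: (partA pp a0 cK hR hpiR flR h1 h2 hz).
- move=> z x1 x2 h1 h2.
  exact: (partIndep pp a0 cK hR hpiR sg1 sg2 flR h1 h2).
- move=> z x h.
  exact: (partB (piS := piS) pp a0 hS hpiS sg2 sgS1 sgS2 flS comm h).
- exact: (partC pp a0 cK hR hpiR hS hpiS sg1 sg2 flR sgS1 sgS2 flS comm).
Qed.
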